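(* Let $G$ be a connected graph with vertices $v_1,\dots,v_n$, and let $k_1,k$ be nonnegative integers. Then \[ \sum_{i=1}^{n} dav(G-v_i,k_1,k,k)=(n-2-k_1-2k)\,dav(G,k_1,k,k)+(k_1+1)\,dav(G,k_1+1,k,k)+(k+1)\,dav(G,k_1,k,k+1). \]
   Context: All graphs are finite, simple and undirected. $G-v$ denotes the graph obtained from $G$ by deleting vertex $v$ and its incident edges. For a graph $F$ and nonnegative integers $k_1,k_2,k_3$, $dav(F,k_1,k_2,k_3)$ denotes the number of pairs of adjacent vertices $x$ and $y$ in $F$ such that exactly $k_1$ vertices are adjacent to both $x$ and $y$, exactly $k_2$ vertices other than $y$ are adjacent to $x$ but not to $y$, and exactly $k_3$ vertices other than $x$ are adjacent to $y$ but not to $x$. *)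

(* Defs.v *)
From mathcomp Require Import all_boot all_order all_algebra.
Set Implicit Arguments. Unset Strict Implicit. Unset Printing Implicit Defensive.

(* A finite simple graph: vertex type T : finType, adjacency e : rel T,
   symmetric and irreflexive.  Subgraphs are induced on a vertex set V. *)
Definition simple_graph (T : finType) (e : rel T) : Prop :=
  symmetric e /\ irreflexive e.

Definition connected_graph (T : finType) (e : rel T) : Prop :=
  forall x y : T, connect e x y.

Definition dav_ok (T : finType) (e : rel T) (V : {set T}) (k1 k2 k3 : nat)
  (x y : T) : bool :=
  [&& #|[set z in V | e x z && e y z]| == k1,
      #|[set z in V | (z != y) && e x z && ~~ e y z]| == k2 &
      #|[set z in V | (z != x) && e y z && ~~ e x z]| == k3].

(* dav(F,k1,k2,k3) for F the subgraph of (T,e) induced by V: the number of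
   (unordered) pairs {x,y} of adjacent vertices of F that can be labelled
   x,y so as to satisfy the conditions. *)
Definition dav (T : finType) (e : rel T) (V : {set T}) (k1 k2 k3 : nat) : nat :=
  #|[set E : {set T} | [exists x, exists y,
       [&& E == [set x; y], x \in V, y \in V, e x y & dav_ok e V k1 k2 k3 x y]]]|.

(* Main.v *)
Require Import Defs.
From mathcomp Require Import all_boot all_order all_algebra.
From mathcomp Require Import zify.
Set Implicit Arguments.
Import GRing.Theory Num.Theory.

Lemma sum_in (T : finType) (S : {set T}) : \sum_(v : T) (v \in S : nat) = #|S|.
Proof.
rewrite -sum1_card [RHS]big_mkcond /=; apply: eq_bigr => v _; by case: (v \in S).
Qed.

Lemma sum_eq (T : finType) (x : T) : \sum_(v : T) (v == x : nat) = 1.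
Proof.
rewrite -(cards1 x) -sum_in; apply: eq_bigr => v _; by rewrite inE.
Qed.

Lemma count_lemma (T : finType) (x y : T) (SA SB SC : {set T})
  (P : nat -> nat -> nat -> bool) :
  (forall v, (v == x) + (v == y) + (v \in SA) + (v \in SB) + (v \in SC) <= 1) ->
  x != y ->
  2 + #|SA| + #|SB| + #|SC| <= #|T| /\
  \sum_(v : T) ((v != x) && (v != y) &&
     P (#|SA| - (v \in SA)) (#|SB| - (v \in SB)) (#|SC| - (v \in SC)) : nat)
  = (#|T| - (2 + #|SA| + #|SB| + #|SC|)) * P #|SA| #|SB| #|SC|
    + #|SA| * P (#|SA| - 1) #|SB| #|SC|
    + #|SB| * P #|SA| (#|SB| - 1) #|SC|
    + #|SC| * P #|SA| #|SB| (#|SC| - 1).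
Proof.
move=> H nxy.
set a := #|SA|; set b := #|SB|; set c := #|SC|.
pose s v := (v == x) + (v == y) + (v \in SA) + (v \in SB) + (v \in SC).
pose R v := 1 - s v.
have eT : #|T| = \sum_v R v + (2 + a + b + c).
  have -> : #|T| = \sum_(v : T) 1.
    by rewrite -sum1_card; apply: eq_bigl.
  rewrite (eq_bigr (fun v => R v + s v)); last first.
    move=> v _; rewrite /R subnK //; exact: H.
  rewrite big_split /= /s !big_split /= !sum_eq !sum_in.
  lia.
split; first by rewrite eT leq_addl.
rewrite eT addnK.
rewrite (eq_bigr (fun v => R v * P a b c + (v \in SA) * P (a - 1) b c
   + (v \in SB) * P a (b - 1) c + (v \in SC) * P a b (c - 1))); last first.
  move=> v _; move: (H v); rewrite /R /s.
  case: (v == x); case: (v == y); case: (v \in SA); case: (v \in SB);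
    case: (v \in SC) => //= _; rewrite ?subn0 ?muln0 ?mul0n ?addn0 ?add0n ?mul1n //.
rewrite !big_split /= -!big_distrl /= !sum_in //.
Qed.

Lemma t2 (a b c k1 k : nat) : (a * ([&& a - 1 == k1, b == k & c == k] || [&& a - 1 == k1, c == k & b == k]) = 
  k1.+1 * ([&& a == k1.+1, b == k & c == k] || [&& a == k1.+1, c == k & b == k]))%N.
Proof. case: a => [|a] /=; first by rewrite muln0. rewrite subn1 /= eqSS.
have [->|ne] := eqVneq a k1; first done. by rewrite /= !muln0. Qed.
Lemma t3 (a b c k1 k : nat) : (b * ([&& a == k1, b - 1 == k & c == k] || [&& a == k1, c == k & b - 1 == k])
  + c * ([&& a == k1, b == k & c - 1 == k] || [&& a == k1, c - 1 == k & b == k]) = 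
  k.+1 * ([&& a == k1, b == k & c == k.+1] || [&& a == k1, c == k & b == k.+1]))%N.
Proof.
have [ea|ea] := eqVneq a k1; last by rewrite /= !muln0.
rewrite /=.
case: b => [|b]; case: c => [|c]; rewrite ?subn1 /= ?eqSS ?muln0 ?mul0n //.
all: lia.
Qed.

Section Main.
Variables (T : finType) (e : rel T).
Hypotheses (esym : symmetric e) (eirr : irreflexive e).

Definition ind (V : {set T}) k1 k2 k3 (E : {set T}) : bool :=
  [exists x, exists y, [&& E == [set x; y], x \in V, y \in V, e x y & dav_ok e V k1 k2 k3 x y]].

Lemma davE V k1 k2 k3 : dav e V k1 k2 k3 = \sum_(E : {set T}) (ind V k1 k2 k3 E : nat).
Proof.
rewrite /dav -sum1_card [LHS]big_mkcond /=; apply: eq_bigr => E _.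
by rewrite inE /ind; case: ifP.
Qed.

Lemma ind_edge x y V k1 k2 k3 : e x y ->
  ind V k1 k2 k3 [set x; y] =
  [&& x \in V, y \in V & dav_ok e V k1 k2 k3 x y || dav_ok e V k1 k2 k3 y x].
Proof.
move=> exy; have nxy : x != y by apply: contraTneq exy => ->; rewrite eirr.
apply/existsP/idP.
- case=> x' /existsP [y' /and5P [/eqP E x'V y'V ex' ok]].
  have : x' \in [set x; y] by rewrite E !inE eqxx.
  have : y' \in [set x; y] by rewrite E !inE eqxx orbT.
  have nx'y' : x' != y' by apply: contraTneq ex' => ->; rewrite eirr.
  rewrite !inE => /orP [] /eqP ey /orP [] /eqP ex; subst.
  + by rewrite eqxx in nx'y'.
  + by rewrite x'V y'V ok orbT.
  + by rewrite x'V y'V ok.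
  + by rewrite eqxx in nx'y'.
- case/and3P=> xV yV /orP [ok|ok].
  + by exists x; apply/existsP; exists y; rewrite eqxx xV yV exy ok.
  + exists y; apply/existsP; exists x; rewrite setUC eqxx xV yV ok esym exy //.
Qed.

Lemma card_D1 v (p : pred T) :
  #|[set z in setT :\ v | p z]| = #|[set z | p z]| - (v \in [set z | p z]).
Proof.
rewrite (cardsD1 v [set z | p z]) addKn; apply: eq_card => z.
by rewrite !inE andbT.
Qed.

Lemma card_T (p : pred T) : #|[set z in setT | p z]| = #|[set z | p z]|.
Proof. by apply: eq_card => z; rewrite !inE. Qed.

Lemma dav_ok_swap V k1 k2 k3 x y : dav_ok e V k1 k2 k3 y x =
  [&& #|[set z in V | e x z && e y z]| == k1,
      #|[set z in V | (z != x) && e y z && ~~ e x z]| == k2 &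
      #|[set z in V | (z != y) && e x z && ~~ e y z]| == k3].
Proof.
rewrite /dav_ok; congr [&& _ == _, _ & _].
by apply: eq_card => z; rewrite !inE (andbC (e y z)).
Qed.

Lemma disj x y v : x != y ->
  (v == x) + (v == y) + (v \in [set z | e x z && e y z])
  + (v \in [set z | (z != y) && e x z && ~~ e y z])
  + (v \in [set z | (z != x) && e y z && ~~ e x z]) <= 1.
Proof.
move=> nxy; rewrite !inE.
case: (v =P x) => [->|nx]; first by rewrite eirr (negbTE nxy) /= ?andbF.
case: (v =P y) => [->|ny]; first by rewrite eirr /= ?andbF.
by case: (e x v); case: (e y v).
Qed.

End Main.

Local Open Scope ring_scope.
Lemma Posz_sum (I : finType) (F : I -> nat) : (\sum_i F i)%N%:Z = (\sum_i (F i)%:Z)%R.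
Proof. exact: (big_morph Posz PoszD (erefl _)). Qed.

Lemma t1 (n a b c k1 k : nat) (p : bool) : (2 + a + b + c <= n)%N ->
  (p -> [/\ a = k1, b = k & c = k]) ->
  (((n - (2 + a + b + c)) * p)%N%:Z = (n%:Z - 2 - k1%:Z - 2 * k%:Z) * (p : nat)%:Z)%R.
Proof.
case: p => [|] hn H; last by rewrite muln0 mulr0.
case: (H isT) => ea eb ec; subst; rewrite muln1 mulr1; lia.
Qed.

Section Main2.
Variables (T : finType) (e : rel T).
Hypotheses (esym : symmetric e) (eirr : irreflexive e).
Local Open Scope ring_scope.

Lemma perE (k1 k : nat) (E : {set T}) :
 \sum_(v : T) (ind e (setT :\ v) k1 k k E : nat)%:Z =
 (#|T|%:Z - 2 - k1%:Z - 2 * k%:Z) * (ind e setT k1 k k E : nat)%:Z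
 + (k1.+1)%:Z * (ind e setT k1.+1 k k E : nat)%:Z
 + (k.+1)%:Z * (ind e setT k1 k k.+1 E : nat)%:Z.
Proof.
case: (boolP [exists x, exists y, (E == [set x; y]) && e x y]) =>
   [/existsP [x /existsP [y /andP [/eqP -> exy]]] | noE]; last first.
  have H0 : forall V a b c, ind e V a b c E = false.
    move=> V a b c; case: (boolP (ind e V a b c E)) => // /existsP [x /existsP [y /and5P [eE _ _ exy _]]].
    by case/negP: noE; apply/existsP; exists x; apply/existsP; exists y; rewrite eE exy.
  by rewrite !H0 big1 ?mulr0 ?addr0 // => v _; rewrite H0.
have nxy : x != y by apply: contraTneq exy => ->; rewrite eirr.
set SA := [set z | e x z && e y z].
set SB := [set z | (z != y) && e x z && ~~ e y z].
set SC := [set z | (z != x) && e y z && ~~ e x z].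
pose P a b c := [&& a == k1, b == k & c == k] || [&& a == k1, c == k & b == k].
have Hv : forall v, ind e (setT :\ v) k1 k k [set x; y] =
   (v != x) && (v != y) && P (#|SA| - (v \in SA))%N (#|SB| - (v \in SB))%N (#|SC| - (v \in SC))%N.
  move=> v; rewrite ind_edge //. rewrite (@dav_ok_swap _ e _ _ _ _ x y). rewrite /dav_ok. rewrite !card_D1. rewrite !in_setD1. rewrite !in_setT. rewrite !andbT.
  by rewrite (eqtype.eq_sym x v) (eqtype.eq_sym y v) andbA.
have HT : forall a b c, ind e setT a b c [set x; y] =
   [&& #|SA| == a, #|SB| == b & #|SC| == c] || [&& #|SA| == a, #|SC| == b & #|SB| == c].
  by move=> a b c; rewrite ind_edge // (@dav_ok_swap _ e _ _ _ _ x y) /dav_ok !card_T !in_setT.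
rewrite (eq_bigr (fun v => ((v != x) && (v != y) &&
   P (#|SA| - (v \in SA))%N (#|SB| - (v \in SB))%N (#|SC| - (v \in SC))%N : nat)%:Z)); last first.
  by move=> v _; rewrite Hv.
rewrite -Posz_sum.
have [hle ->] := @count_lemma _ x y SA SB SC P (fun v => @disj _ e eirr x y v nxy) nxy.
rewrite !HT !PoszD.
rewrite /P -[LHS]addrA -[LHS]addrA -[RHS]addrA.
rewrite -[(Posz (#|SB| * _) + Posz _)]PoszD t3.
congr (_ + (_ + _)).
- apply: t1 => // /orP [] /and3P [/eqP -> /eqP -> /eqP ->] //.
- by rewrite t2 PoszM.
Qed.
End Main2.

Unset Implicit Arguments.
Theorem corollary17 (T : finType) (e : rel T) (k1 k : nat) :
  simple_graph e -> connected_graph e ->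
  (\sum_(v : T) (dav e (setT :\ v) k1 k k)%:Z)
  = ((#|T|%:Z - 2 - k1%:Z - 2 * k%:Z) * (dav e setT k1 k k)%:Z
     + (k1.+1)%:Z * (dav e setT k1.+1 k k)%:Z
     + (k.+1)%:Z * (dav e setT k1 k k.+1)%:Z :> int)%R.
Proof.
move=> [esym eirr] _.
rewrite (eq_bigr (fun v => \sum_(E : {set T}) (ind e (setT :\ v) k1 k k E : nat)%:Z)%R); last first.
  by move=> v _; rewrite davE Posz_sum.
rewrite exchange_big /= !davE !Posz_sum !GRing.mulr_sumr -!big_split /=.
by apply: eq_bigr => E _; rewrite perE.
Qed.
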